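(* Let $G=(V,E)$ be a planar graph with a fixed planar embedding, let $c,\delta,\varepsilon\in(0,1)$, let $k\ge1$ be an integer, and let $\ell\ge 2k^2+2k\delta^{-1}+2\varepsilon^{-1}-1$ be an integer. Then for any $c$-maximum independent sets $S_1,\dots,S_k$ of $G$ there exists $p\in\{0,\dots,\ell\}$ such that simultaneously (i) $|S_h\cap L^p|\le(\delta/2)|S_h|$ for all $h\in[k]$; (ii) $\sum_{i\ne j}|(S_i\cap L^p)\Delta(S_j\cap L^p)|\le(\varepsilon/2)\sum_{i\ne j}|S_i\Delta S_j|$; and (iii) $|(S_i\cap L^p)\Delta(S_j\cap L^p)|\le\frac12|S_i\Delta S_j|$ for every $i\ne j$. Consequently, if moreover $|S_i\Delta S_j|\ge 2$ for all $i\ne j$, then the sets $S_i\setminus L^p$, $i\in[k]$, are pairwise distinct.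
   Context: Levels of vertices of an embedded planar graph: a vertex is at level 1 if it lies on the exterior face; inductively, vertices on the exterior face of the graph obtained after deleting all vertices of levels $1,\dots,i-1$ are at level $i$. For an integer $\ell\ge 0$ and $p\in\{0,\dots,\ell\}$, the $p$-th stratum $L^p$ is the set of vertices whose level is congruent to $p$ modulo $\ell+1$. A $c$-maximum independent set is an independent set $S$ with $|S|\ge c$ times the maximum size of an independent set of $G$. *)

(* Defs.v *)
From HB Require Import structures.
From mathcomp Require Import all_boot all_order all_algebra.
From mathcomp Require Import all_classical all_reals all_analysis.
Set Implicit Arguments. Unset Strict Implicit. Unset Printing Implicit Defensive.
Import numFieldNormedType.Exports.
Import Order.TTheory GRing.Theory Num.Theory.
Local Open Scope classical_set_scope.
Local Open Scope ring_scope.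

Definition simple_graph (V : finType) (e : rel V) : Prop :=
  symmetric e /\ irreflexive e.

(* A planar embedding (drawing) of (V, e) in the plane R x R:
   - pos : injective placement of the vertices;
   - arc u v : a Jordan arc [0,1] -> plane from pos u to pos v for each edge,
     traversed in reverse for (v,u);
   - the interior of an arc contains no vertex;
   - interiors of arcs of distinct edges are disjoint. *)
Definition planar_embedding (R : realType) (V : finType) (e : rel V)
    (pos : V -> R * R) (arc : V -> V -> R -> R * R) : Prop :=
  [/\ injective pos,
      (forall u v, e u v ->
         [/\ {within [set t : R | 0 <= t <= 1], continuous (arc u v)},
             {in [set t : R | 0 <= t <= 1] &, injective (arc u v)},
             arc u v 0 = pos u, arc u v 1 = pos v &
             forall t, arc v u t = arc u v (1 - t)]),
      (forall u v w t, e u v -> 0 < t < 1 -> arc u v t <> pos w) &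
      (forall u v x y t s, e u v -> e x y -> 0 < t < 1 -> 0 < s < 1 ->
         ~ ((u == x) && (v == y) || (u == y) && (v == x)) ->
         arc u v t <> arc x y s)].

Definition drawing (R : realType) (V : finType) (e : rel V)
    (pos : V -> R * R) (arc : V -> V -> R -> R * R) (W : {set V}) : set (R * R) :=
  [set z | (exists2 v, v \in W & pos v = z) \/
           (exists u v t, [/\ u \in W, v \in W, e u v, 0 <= t <= 1 & arc u v t = z])].

(* The exterior (unbounded) face of the drawing of W: points of the complement
   whose connected component in the complement is unbounded. *)
Definition exterior_face (R : realType) (V : finType) (e : rel V)
    (pos : V -> R * R) (arc : V -> V -> R -> R * R) (W : {set V}) : set (R * R) :=
  let D := drawing e pos arc W in
  [set z | ~ D z /\ forall M : R, exists y,
       connected_component (~` D) z y /\ M < `|y.1| + `|y.2|].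

Definition on_exterior (R : realType) (V : finType) (e : rel V)
    (pos : V -> R * R) (arc : V -> V -> R -> R * R) (W : {set V}) (v : V) : Prop :=
  v \in W /\ closure (exterior_face e pos arc W) (pos v).

Definition outer_layer (R : realType) (V : finType) (e : rel V)
    (pos : V -> R * R) (arc : V -> V -> R -> R * R) (W : {set V}) : {set V} :=
  [set v in W | `[< on_exterior e pos arc W v >]].

(* remaining i = vertices of level > i (remaining after deleting levels 1..i). *)
Fixpoint remaining (R : realType) (V : finType) (e : rel V)
    (pos : V -> R * R) (arc : V -> V -> R -> R * R) (i : nat) : {set V} :=
  match i with
  | 0 => [set: V]%SET
  | i'.+1 => let W := remaining e pos arc i' in W :\: outer_layer e pos arc W
  end.

Definition has_level (R : realType) (V : finType) (e : rel V)
    (pos : V -> R * R) (arc : V -> V -> R -> R * R) (v : V) (lvl : nat) : Prop :=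
  exists i, lvl = i.+1 /\ v \in outer_layer e pos arc (remaining e pos arc i).

Definition stratum (R : realType) (V : finType) (e : rel V)
    (pos : V -> R * R) (arc : V -> V -> R -> R * R) (l p : nat) : {set V} :=
  [set v | `[< exists lvl, has_level e pos arc v lvl /\ (lvl %% l.+1)%N = p >]].

Definition independent (V : finType) (e : rel V) (S : {set V}) : bool :=
  [forall u in S, forall v in S, ~~ e u v].

Definition alpha (V : finType) (e : rel V) : nat :=
  \max_(S : {set V} | independent e S) #|S|.

Definition c_max_independent (R : realType) (V : finType) (e : rel V)
    (c : R) (S : {set V}) : Prop :=
  independent e S /\ c * (alpha e)%:R <= (#|S|)%:R.

Definition symdiff (V : finType) (A B : {set V}) : {set V} :=
  (A :\: B) :|: (B :\: A).

(* Main.v *)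
Require Import Defs.
From HB Require Import structures.
From mathcomp Require Import all_boot all_order all_algebra.
From mathcomp Require Import all_classical all_reals all_analysis.
From mathcomp Require Import ring lra.
Import numFieldNormedType.Exports.
Import Order.TTheory GRing.Theory Num.Theory.
Local Open Scope ring_scope.
Lemma sum_strata_le (V : finType) (l : nat) (T : nat -> {set V})
  (disj : forall x p q, (p < l.+1)%N -> (q < l.+1)%N -> x \in T p -> x \in T q -> p = q)
  (A : {set V}) :
  (\sum_(p < l.+1) #|A :&: T p| <= #|A|)%N.
Proof.
have E : forall p, #|A :&: T p| = (\sum_(x in A) (x \in T p))%N.
  move=> p; rewrite -sum1_card big_mkcond /= [RHS]big_mkcond /=.
  by apply: eq_bigr => x _; rewrite !inE; case: (x \in A); case: (x \in T p).
under eq_bigr do rewrite E.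
rewrite exchange_big /= -sum1_card leq_sum // => x _.
case: (boolP [exists p : 'I_l.+1, x \in T p]) => [/existsP [p0 Hp0]|/existsPn Hn].
  rewrite (bigD1 p0) //= Hp0 big1 // => q Hq.
  case Hx: (x \in T q) => //; move/negP: Hq; case.
  apply/eqP; apply: val_inj; exact: (disj x q p0 (ltn_ord q) (ltn_ord p0) Hx Hp0).
by rewrite big1 // => q _; rewrite (negbTE (Hn q)).
Qed.

Lemma bad_count (R : realType) (l : nat) (a : 'I_l.+1 -> nat) (M : nat) (t : R) :
  0 < t -> (\sum_p a p <= M)%N ->
  (#|[set p | t * M%:R < (a p)%:R]|)%:R < t^-1.
Proof.
move=> t0 hs.
set B := [set p | _].
case: (boolP (B == finset.set0)) => [/eqP ->|nz]; first by rewrite cards0 invr_gt0.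
have [p0 p0B] : exists p0, p0 \in B by apply/set0Pn.
have hM : (\sum_(p in B) (a p)%:R <= M%:R :> R).
  rewrite -natr_sum ler_nat (leq_trans _ hs) //.
  by rewrite [X in (_ <= X)%N](bigID (mem B)) /= leq_addr.
have hlt : (\sum_(p in B) (t * M%:R) < \sum_(p in B) (a p)%:R :> R).
  apply: ltr_sum; first by apply/hasP; exists p0 => //; rewrite mem_index_enum.
  by move=> p; rewrite inE.
rewrite sumr_const in hlt.
have Mpos : 0 < M%:R :> R.
  rewrite ltr0n lt0n; apply/negP => /eqP M0.
  have := lt_le_trans hlt hM; rewrite M0 mulr0 mul0rn ltxx //.
rewrite -[t^-1]mul1r ltr_pdivlMr //  -(ltr_pM2r Mpos) mul1r.
have -> : #|B|%:R * t * M%:R = (t * M%:R) *+ #|B| by rewrite -mulrA mulr_natl.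
exact: lt_le_trans hlt hM.
Qed.

Lemma remaining_sub (R : realType) (V : finType) (e : rel V)
    (pos : V -> R * R) (arc : V -> V -> R -> R * R) i n :
  remaining e pos arc (i + n) \subset remaining e pos arc i.
Proof.
elim: n => [|n IH]; first by rewrite addn0.
rewrite addnS /=; apply/fintype.subsetP => x; rewrite inE => /andP[_]; exact: (fintype.subsetP IH).
Qed.

Lemma level_uniq (R : realType) (V : finType) (e : rel V)
    (pos : V -> R * R) (arc : V -> V -> R -> R * R) v i j :
  v \in outer_layer e pos arc (remaining e pos arc i) ->
  v \in outer_layer e pos arc (remaining e pos arc j) -> i = j.
Proof.
wlog lij : i j / (i <= j)%N.
  move=> H hi hj; case: (leqP i j) => h; first exact: H.
  by apply/esym; apply: H => //; exact: ltnW.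
move=> hi hj; have [hlt|hge] := ltnP i j; last by apply/eqP; rewrite eqn_leq lij.
have hsub : v \in remaining e pos arc j by move: hj; rewrite inE => /andP[].
have : v \in remaining e pos arc i.+1.
  have H := fintype.subsetP (remaining_sub _ _ e pos arc i.+1 (j - i.+1)) v; apply: H; by rewrite subnKC.
by rewrite /= inE hi.
Qed.

Lemma stratum_disj (R : realType) (V : finType) (e : rel V)
    (pos : V -> R * R) (arc : V -> V -> R -> R * R) l x p q :
  (p < l.+1)%N -> (q < l.+1)%N ->
  x \in stratum e pos arc l p -> x \in stratum e pos arc l q -> p = q.
Proof.
move=> _ _; rewrite !inE => hp hq.
case: hp => l1 [H1 <-].
case: hq => l2 [H2 <-].
case: H1 => i1 [E1 h1]; case: H2 => i2 [E2 h2].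
by rewrite E1 E2 (level_uniq _ _ _ _ _ _ _ _ h1 h2).
Qed.

Lemma symdiffI (V : finType) (A B T : {set V}) :
  symdiff (A :&: T) (B :&: T) = symdiff A B :&: T.
Proof.
by apply/setP => x; rewrite !inE; case: (x \in A); case: (x \in B); case: (x \in T).
Qed.

Lemma card_bigcup_seq (I : eqType) (V : finType) (r : seq I) (F : I -> {set V}) :
  (#|\bigcup_(i <- r) F i| <= \sum_(i <- r) #|F i|)%N.
Proof.
elim: r => [|a r IH]; first by rewrite !big_nil cards0.
rewrite !big_cons; apply: leq_trans (leq_card_setU _ _) _.
by rewrite leq_add2l.
Qed.

Lemma arith_fin (R : realType) (X Y Z K D E L : R) :
  X <= 2 * K / D -> Y < 2 / E -> Z <= 2 * (K * K) ->
  2 * (K * K) + 2 * K / D + 2 / E - 1 <= L -> X + Y + Z < L + 1.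
Proof. move=> *; lra. Qed.

Theorem mainTheorem5 (R : realType) (V : finType) (e : rel V)
    (pos : V -> R * R) (arc : V -> V -> R -> R * R)
    (c delta eps : R) (k l : nat) (S : 'I_k -> {set V}) :
  simple_graph e ->
  planar_embedding e pos arc ->
  0 < c < 1 -> 0 < delta < 1 -> 0 < eps < 1 ->
  (1 <= k)%N ->
  2 * (k%:R) ^+ 2 + 2 * k%:R / delta + 2 / eps - 1 <= l%:R ->
  (forall h, c_max_independent e c (S h)) ->
  exists p : nat, [/\ (p <= l)%N,
    (forall h, (#|S h :&: stratum e pos arc l p|)%:R <= delta / 2 * (#|S h|)%:R),
    ((\sum_(i < k) \sum_(j < k | i != j)
        (#|symdiff (S i :&: stratum e pos arc l p) (S j :&: stratum e pos arc l p)|)%:R : R)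
      <= eps / 2 * \sum_(i < k) \sum_(j < k | i != j) (#|symdiff (S i) (S j)|)%:R),
    (forall i j, i != j ->
       (#|symdiff (S i :&: stratum e pos arc l p) (S j :&: stratum e pos arc l p)|)%:R
         <= (1 / 2 : R) * (#|symdiff (S i) (S j)|)%:R) &
    ((forall i j, i != j -> (2 <= #|symdiff (S i) (S j)|)%N) ->
       forall i j, i != j -> S i :\: stratum e pos arc l p != S j :\: stratum e pos arc l p)].
Proof.
move=> _ _ _ /andP[d0 _] /andP[e0 _] _ hl _.
pose T := fun p => stratum e pos arc l p.
have disj : forall x p q, (p < l.+1)%N -> (q < l.+1)%N -> x \in T p -> x \in T q -> p = q.
  by move=> x p q hp hq; apply: stratum_disj.
pose D := fun i j => symdiff (S i) (S j).
pose M2 := (\sum_(i < k) \sum_(j < k | i != j) #|D i j|)%N.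
pose a2 := fun p : 'I_l.+1 => (\sum_(i < k) \sum_(j < k | i != j) #|D i j :&: T p|)%N.
pose B1 := fun h => [set p : 'I_l.+1 | delta / 2 * (#|S h|)%:R < (#|S h :&: T p|)%:R].
pose B2 := [set p : 'I_l.+1 | eps / 2 * M2%:R < (a2 p)%:R].
pose B3 := fun ij : 'I_k * 'I_k =>
  [set p : 'I_l.+1 | (1 / 2 : R) * (#|D ij.1 ij.2|)%:R < (#|D ij.1 ij.2 :&: T p|)%:R].
pose U := (\bigcup_(h <- index_enum 'I_k) B1 h) :|: B2
   :|: \bigcup_(ij <- index_enum (prod (ordinal k) (ordinal k))) B3 ij.
have c1 : forall h, (#|B1 h|)%:R < (delta / 2)^-1.
  move=> h; apply: bad_count; first by rewrite divr_gt0.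
  exact: sum_strata_le.
have c2 : (#|B2|)%:R < (eps / 2)^-1.
  apply: bad_count; first by rewrite divr_gt0.
  rewrite /a2 exchange_big /= /M2 leq_sum // => i _.
  rewrite exchange_big /= leq_sum // => j _.
  exact: sum_strata_le.
have c3 : forall ij, (#|B3 ij|)%:R < (1 / 2 : R)^-1.
  move=> ij; apply: bad_count; first by [].
  exact: sum_strata_le.
have cU : (#|U|)%:R < l.+1%:R :> R.
  have hU : (#|U| <= \sum_(h <- index_enum 'I_k) #|B1 h| + #|B2|
      + \sum_(ij <- index_enum (prod (ordinal k) (ordinal k))) #|B3 ij|)%N.
    apply: leq_trans (leq_card_setU _ _) _; apply: leq_add; last exact: card_bigcup_seq.
    apply: leq_trans (leq_card_setU _ _) _; apply: leq_add => //; exact: card_bigcup_seq.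
  rewrite -(ler_nat R) !natrD !natr_sum in hU.
  apply: le_lt_trans hU _.
  have s1 : \sum_(h <- index_enum 'I_k) (#|B1 h|)%:R <= \sum_(h <- index_enum 'I_k) (delta / 2)^-1.
    by apply: ler_sum => h _; exact: ltW.
  have s3 : \sum_(ij <- index_enum (prod (ordinal k) (ordinal k))) (#|B3 ij|)%:R
      <= \sum_(ij <- index_enum (prod (ordinal k) (ordinal k))) (1 / 2 : R)^-1.
    by apply: ler_sum => h _; exact: ltW.
  rewrite !sumr_const card_prod card_ord in s1 s3.
  rewrite !invf_div in s1 c2 s3.
  rewrite -[_ *+ k]mulr_natr in s1; rewrite -[_ *+ (k * k)]mulr_natr natrM divr1 in s3.
  have e1 : 2 / delta * k%:R = 2 * k%:R / delta by rewrite mulrAC.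
  rewrite e1 in s1; rewrite expr2 in hl.
  have -> : (l.+1)%:R = l%:R + 1 :> R by rewrite natr1.
  exact (@arith_fin R _ _ _ _ _ _ _ s1 c2 s3 hl).
have [p pU] : exists p, p \notin U.
  apply/existsP; rewrite -negb_forall; apply/negP => /forallP hall.
  have : (l.+1 <= #|U|)%N.
    rewrite -{1}(card_ord l.+1); apply: subset_leq_card; apply/fintype.subsetP => x _; exact: hall.
  by rewrite -(ler_nat R) leNgt cU.
have nB1 h : p \notin B1 h.
  apply: contra pU => ph; rewrite !finset.in_setU; apply/orP; left; apply/orP; left.
  by apply/bigcupP; exists h.
have nB2 : p \notin B2 by apply: contra pU => ph; rewrite !finset.in_setU ph orbT.
have nB3 ij : p \notin B3 ij.
  apply: contra pU => ph; rewrite !finset.in_setU; apply/orP; right.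
  by apply/bigcupP; exists ij.
have h3 : forall i j, (#|symdiff (S i :&: stratum e pos arc l p) (S j :&: stratum e pos arc l p)|)%:R
         <= (1 / 2 : R) * (#|symdiff (S i) (S j)|)%:R.
  move=> i j; have := nB3 (i, j); rewrite inE -leNgt /=.
  by rewrite symdiffI.
exists (val p); split.
- by rewrite -ltnS ltn_ord.
- by move=> h; have := nB1 h; rewrite inE -leNgt.
- have := nB2; rewrite inE -leNgt.
  have -> : (a2 p)%:R = (\sum_(i < k) \sum_(j < k | i != j)
        (#|symdiff (S i :&: stratum e pos arc l p) (S j :&: stratum e pos arc l p)|)%:R : R).
    rewrite /a2 natr_sum; apply: eq_bigr => i _; rewrite natr_sum; apply: eq_bigr => j _.
    by rewrite symdiffI.
  have -> : (M2)%:R = (\sum_(i < k) \sum_(j < k | i != j) (#|symdiff (S i) (S j)|)%:R : R).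
    rewrite /M2 natr_sum; apply: eq_bigr => i _; rewrite natr_sum; done.
  done.
- by move=> i j _; exact: h3.
- move=> h2 i j nij; apply/negP => /eqP Eij.
  have hs : symdiff (S i) (S j) \subset stratum e pos arc l p.
    apply/fintype.subsetP => x; rewrite /symdiff finset.in_setU !finset.in_setD => /orP[/andP[xj xi]|/andP[xi xj]];
      case xT: (x \in stratum e pos arc l p) => //.
    + have : x \in S i :\: stratum e pos arc l p by rewrite finset.in_setD xT xi.
      by rewrite Eij finset.in_setD (negbTE xj) andbF.
    + have : x \in S j :\: stratum e pos arc l p by rewrite finset.in_setD xT xj.
      by rewrite -Eij finset.in_setD (negbTE xi) andbF.
  have := h3 i j; rewrite symdiffI.
  have -> : symdiff (S i) (S j) :&: stratum e pos arc l p = symdiff (S i) (S j).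
    exact: (finset.setIidPl hs).
  have := h2 i j nij.
  move: (#|symdiff (S i) (S j)|) => n hn.
  rewrite -(ler_nat R) in hn.
  move=> H; lra.
Qed.
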